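(* Let $0<q<1$. For complex numbers $\alpha,a,b,c$ with $\mathrm{Re}(c-a-b)>0$, and such that every $q^2$-gamma value occurring below is evaluated at a point that is not a non-positive integer, we have \[ \sum_{n=0}^{\infty}\frac{(\alpha|q^{2})_{a+n}\,(1-\alpha|q^{2})_{b+n}}{[n]_{q^{2}}!\,\Gamma_{q^{2}}(c+n+1)}\,q^{2(c-a-b)n} =\frac{(\alpha|q^{2})_{a}\,(1-\alpha|q^{2})_{b}\,\Gamma_{q^{2}}(c-a-b)}{(1-\alpha|q^{2})_{c-a}\,(\alpha|q^{2})_{c-b}}\;q^{-\alpha(\alpha-1)}\,\frac{\sin_{q}(\pi\alpha)}{\pi_{q}}. \]
   Context: Let $0<q<1$ and write $q^{x}=e^{x\log q}$ for complex $x$. Set $(z;q)_\infty=\prod_{k\ge0}(1-zq^k)$ and $(z_1,\dots,z_m;q)_\infty=\prod_j (z_j;q)_\infty$. The $q$-gamma function is $\Gamma_{q}(x)=\frac{(q;q)_\infty}{(q^{x};q)_\infty}(1-q)^{1-x}$; we use it with base $q^2$: $\Gamma_{q^2}(x)=\frac{(q^2;q^2)_\infty}{(q^{2x};q^2)_\infty}(1-q^2)^{1-x}$. For complex $x,\alpha$, the general $q$-shifted factorial is $(x|q^2)_\alpha=\Gamma_{q^2}(x+\alpha)/\Gamma_{q^2}(x)$. The $q$-integer is $[z]_{q^2}=\frac{1-q^{2z}}{1-q^2}$, and $[0]_{q^2}!=1$, $[n]_{q^2}!=\prod_{k=1}^n[k]_{q^2}$. Gosper's $q$-analogues: $\sin_q(\pi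 x)=q^{(x-1/2)^2}\frac{(q^{2-2x};q^2)_\infty(q^{2x};q^2)_\infty}{(q;q^2)_\infty^2}$ and $\pi_q=(1-q^2)q^{1/4}\frac{(q^2;q^2)_\infty^2}{(q;q^2)_\infty^2}$. *)

(* Defs.v *)
From Stdlib Require Import Reals ClassicalEpsilon.
Open Scope R_scope.

Record Cx := Cmk { Re : R; Im : R }.

Definition RtoC (x : R) : Cx := Cmk x 0.
Definition Cx0 : Cx := RtoC 0.
Definition Cx1 : Cx := RtoC 1.
Definition Cadd (z w : Cx) : Cx := Cmk (Re z + Re w) (Im z + Im w).
Definition Copp (z : Cx) : Cx := Cmk (- Re z) (- Im z).
Definition Csub (z w : Cx) : Cx := Cadd z (Copp w).
Definition Cmul (z w : Cx) : Cx :=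
  Cmk (Re z * Re w - Im z * Im w) (Re z * Im w + Im z * Re w).
(* inverse; Cinv 0 = 0 by the usual total convention *)
Definition Cinv (z : Cx) : Cx :=
  let d := Re z * Re z + Im z * Im z in Cmk (Re z / d) (- Im z / d).
Definition Cdiv (z w : Cx) : Cx := Cmul z (Cinv w).
Definition Cexp (z : Cx) : Cx := Cmk (exp (Re z) * cos (Im z)) (exp (Re z) * sin (Im z)).

(* convergence of complex sequences (componentwise = in modulus) *)
Definition Ccv (u : nat -> Cx) (l : Cx) : Prop :=
  Un_cv (fun n => Re (u n)) (Re l) /\ Un_cv (fun n => Im (u n)) (Im l).
(* the limit (meaningful whenever the sequence converges) *)
Definition Clim (u : nat -> Cx) : Cx := epsilon (inhabits Cx0) (fun l => Ccv u l).

Fixpoint Cprod (N : nat) (f : nat -> Cx) : Cx :=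
  match N with O => Cx1 | S n => Cmul (Cprod n f) (f n) end.
Fixpoint Csum (N : nat) (f : nat -> Cx) : Cx :=
  match N with O => Cx0 | S n => Cadd (Csum n f) (f n) end.

Definition qpow (q : R) (x : Cx) : Cx := Cexp (Cmul (RtoC (ln q)) x).

Definition qpoch_inf (z : Cx) (p : R) : Cx :=
  Clim (fun N => Cprod N (fun k => Csub Cx1 (Cmul z (RtoC (p ^ k))))).

Definition qGamma2 (q : R) (x : Cx) : Cx :=
  Cmul (Cdiv (qpoch_inf (RtoC (q ^ 2)) (q ^ 2))
             (qpoch_inf (qpow q (Cmul (RtoC 2) x)) (q ^ 2)))
       (qpow (1 - q ^ 2) (Csub Cx1 x)).

(* (x|q^2)_alpha = Gamma_{q^2}(x+alpha) / Gamma_{q^2}(x) *)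
Definition qshift2 (q : R) (x alpha : Cx) : Cx :=
  Cdiv (qGamma2 q (Cadd x alpha)) (qGamma2 q x).

Fixpoint qfact2 (q : R) (n : nat) : R :=
  match n with
  | O => 1
  | S m => qfact2 q m * ((1 - q ^ (2 * S m)) / (1 - q ^ 2))
  end.

(* Gosper's sin_q(pi x) *)
Definition sin_q (q : R) (x : Cx) : Cx :=
  Cdiv (Cmul (qpow q (Cmul (Csub x (RtoC (1/2))) (Csub x (RtoC (1/2)))))
             (Cmul (qpoch_inf (qpow q (Csub (RtoC 2) (Cmul (RtoC 2) x))) (q ^ 2))
                   (qpoch_inf (qpow q (Cmul (RtoC 2) x)) (q ^ 2))))
       (Cmul (qpoch_inf (RtoC q) (q ^ 2)) (qpoch_inf (RtoC q) (q ^ 2))).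

(* Gosper's pi_q *)
Definition pi_q (q : R) : Cx :=
  Cdiv (Cmul (RtoC ((1 - q ^ 2) * Rpower q (1/4)))
             (Cmul (qpoch_inf (RtoC (q ^ 2)) (q ^ 2)) (qpoch_inf (RtoC (q ^ 2)) (q ^ 2))))
       (Cmul (qpoch_inf (RtoC q) (q ^ 2)) (qpoch_inf (RtoC q) (q ^ 2))).

(* x is a point where Gamma_{q^2} is defined (not a pole): the infinite
   product (q^{2x};q^2)_inf has no vanishing factor, i.e. q^{2(x+k)} <> 1
   for every k in N.  For real x this says exactly that x is not a
   non-positive integer. *)
Definition qGamma2_ok (q : R) (x : Cx) : Prop :=
  forall k : nat, qpow q (Cmul (RtoC 2) (Cadd x (RtoC (INR k)))) <> Cx1.

(* Main.v *)
From Stdlib Require Import Reals Lra Lia Field ClassicalEpsilon.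
From Coquelicot Require Import Coquelicot.
Require Import Defs.
Open Scope R_scope.

Lemma Cx_ext (z w : Cx) : Re z = Re w -> Im z = Im w -> z = w.
Proof. destruct z, w; simpl; intros; subst; reflexivity. Qed.

Lemma Cx_ring : ring_theory Cx0 Cx1 Cadd Cmul Csub Copp (@eq Cx).
Proof.
constructor; intros; apply Cx_ext; destruct x; try destruct y; try destruct z;
unfold Cx0, Cx1, RtoC, Cadd, Cmul, Csub, Copp; simpl; ring.
Qed.

Lemma Cx_field : field_theory Cx0 Cx1 Cadd Cmul Csub Copp Cdiv Cinv (@eq Cx).
Proof.
constructor.
- exact Cx_ring.
- intro H. assert (H1 := f_equal Re H). unfold Cx0, Cx1, RtoC in H1; simpl in H1; lra.
- reflexivity.
- intros [a b] Hz. unfold Cinv, Cmul, Cx1, RtoC; simpl.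
  assert (a*a+b*b <> 0).
  { intro E. apply Hz. assert (a = 0) by nra. assert (b = 0) by nra. subst.
    reflexivity. }
  apply Cx_ext; simpl; field; auto.
Qed.

Add Field Cxfield : Cx_field.

Declare Scope Cx_scope.
Delimit Scope Cx_scope with X.
Infix "+" := Cadd : Cx_scope.
Infix "*" := Cmul : Cx_scope.
Infix "-" := Csub : Cx_scope.
Infix "/" := Cdiv : Cx_scope.
Notation "- x" := (Copp x) : Cx_scope.

Lemma test (a b c : Cx) : b <> Cx0 -> ((a * b + c) / b = a + c / b)%X.
Proof. intros. field. auto. Qed.
Definition tc (z : Cx) : C := (Re z, Im z).
Definition Nm (z : Cx) : R := Cmod (tc z).

Lemma tc_add z w : tc (Cadd z w) = Cplus (tc z) (tc w). Proof. reflexivity. Qed.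
Lemma tc_mul z w : tc (Cmul z w) = Cmult (tc z) (tc w). Proof. reflexivity. Qed.
Lemma tc_opp z : tc (Copp z) = Coquelicot.Complex.Copp (tc z). Proof. reflexivity. Qed.
Lemma tc_inv z : tc (Cinv z) = Coquelicot.Complex.Cinv (tc z).
Proof. unfold tc, Coquelicot.Complex.Cinv, Defs.Cinv; simpl. f_equal; f_equal; ring. Qed.

Lemma Nm_ge0 z : 0 <= Nm z. Proof. apply Cmod_ge_0. Qed.
Lemma Nm_mul z w : Nm (Cmul z w) = Nm z * Nm w.
Proof. unfold Nm. rewrite tc_mul. apply Cmod_mult. Qed.
Lemma Nm_add z w : Nm (Cadd z w) <= Nm z + Nm w.
Proof. unfold Nm. rewrite tc_add. apply Cmod_triangle. Qed.
Lemma Nm_opp z : Nm (Copp z) = Nm z.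
Proof. unfold Nm. rewrite tc_opp. apply Cmod_opp. Qed.
Lemma Nm_sub z w : Nm (Csub z w) <= Nm z + Nm w.
Proof. unfold Csub. rewrite <- (Nm_opp w). apply Nm_add. Qed.
Lemma Nm_sub_ge z w : Nm z - Nm w <= Nm (Csub z w).
Proof.
  assert (H := Nm_add (Csub z w) w).
  replace (Cadd (Csub z w) w) with z in H by field. lra.
Qed.
Lemma Nm_inv z : z <> Cx0 -> Nm (Cinv z) = / Nm z.
Proof.
  intro Hz. unfold Nm. rewrite tc_inv. apply Cmod_inv.
  intro E. apply Hz. unfold tc in E. injection E; intros. apply Cx_ext; auto.
Qed.
Lemma Nm_Re z : Rabs (Re z) <= Nm z. Proof. apply (re_le_Cmod (tc z)). Qed.
Lemma Nm_Im z : Rabs (Im z) <= Nm z.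
Proof.
  unfold Nm, Cmod, tc; simpl. rewrite <- sqrt_Rsqr_abs. apply sqrt_le_1_alt.
  unfold Rsqr. nra.
Qed.
Lemma Nm_RtoC r : Nm (RtoC r) = Rabs r.
Proof. unfold Nm, tc, RtoC; simpl. apply Cmod_R. Qed.
Lemma Nm_eq0 z : Nm z = 0 -> z = Cx0.
Proof.
  intro H. apply Cmod_eq_0 in H. unfold tc in H. injection H; intros.
  apply Cx_ext; auto.
Qed.
Lemma Nm_pos z : z <> Cx0 -> 0 < Nm z.
Proof. intros H. destruct (Nm_ge0 z); auto. exfalso; apply H, Nm_eq0; auto. Qed.
Lemma Nm_div z w : w <> Cx0 -> Nm (Cdiv z w) = Nm z / Nm w.
Proof. intros. unfold Cdiv. rewrite Nm_mul, Nm_inv; auto. Qed.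
Lemma Nm_one : Nm Cx1 = 1.
Proof. unfold Cx1. rewrite Nm_RtoC. apply Rabs_R1. Qed.

Lemma RtoC_add a b : RtoC (a + b) = Cadd (RtoC a) (RtoC b).
Proof. apply Cx_ext; simpl; ring. Qed.
Lemma RtoC_mul a b : RtoC (a * b) = Cmul (RtoC a) (RtoC b).
Proof. apply Cx_ext; simpl; ring. Qed.
Lemma RtoC_sub a b : RtoC (a - b) = Csub (RtoC a) (RtoC b).
Proof. apply Cx_ext; simpl; ring. Qed.
Lemma RtoC_opp a : RtoC (- a) = Copp (RtoC a).
Proof. apply Cx_ext; simpl; ring. Qed.
Lemma RtoC_inv a : a <> 0 -> RtoC (/ a) = Cinv (RtoC a).
Proof. intros. apply Cx_ext; simpl; field; auto. Qed.
Lemma RtoC_div a b : b <> 0 -> RtoC (a / b) = Cdiv (RtoC a) (RtoC b).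
Proof. intros. unfold Rdiv, Cdiv. rewrite RtoC_mul, RtoC_inv; auto. Qed.
Lemma RtoC_1 : RtoC 1 = Cx1. Proof. reflexivity. Qed.
Lemma RtoC_0 : RtoC 0 = Cx0. Proof. reflexivity. Qed.
Lemma RtoC_neq0 a : a <> 0 -> RtoC a <> Cx0.
Proof. intros H E. apply H. apply (f_equal Re) in E. exact E. Qed.
Lemma RtoC_pow a n : RtoC (a ^ n) = Cprod n (fun _ => RtoC a).
Proof. induction n; simpl. reflexivity. rewrite RtoC_mul, IHn. field. Qed.
Lemma Ccv_iff u l : Ccv u l <-> (is_lim_seq (fun n => Re (u n)) (Re l) /\ is_lim_seq (fun n => Im (u n)) (Im l)).
Proof. unfold Ccv. rewrite !is_lim_seq_Reals. tauto. Qed.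

Lemma Ccv_unique u l1 l2 : Ccv u l1 -> Ccv u l2 -> l1 = l2.
Proof.
  rewrite !Ccv_iff. intros [a b] [c d]. apply Cx_ext.
  apply is_lim_seq_unique in a. apply is_lim_seq_unique in c. rewrite a in c. injection c; auto.
  apply is_lim_seq_unique in b. apply is_lim_seq_unique in d. rewrite b in d. injection d; auto.
Qed.

Lemma Clim_eq u l : Ccv u l -> Clim u = l.
Proof.
  intro H. unfold Clim. apply (Ccv_unique u). 2: exact H.
  apply epsilon_spec. exists l; auto.
Qed.

Lemma Ccv_const c : Ccv (fun _ => c) c.
Proof. rewrite Ccv_iff; split; apply is_lim_seq_const. Qed.

Lemma Ccv_add u v l m : Ccv u l -> Ccv v m -> Ccv (fun n => Cadd (u n) (v n)) (Cadd l m).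
Proof. rewrite !Ccv_iff; intros [a b] [c d]; split; simpl; apply is_lim_seq_plus'; auto. Qed.

Lemma Ccv_opp u l : Ccv u l -> Ccv (fun n => Copp (u n)) (Copp l).
Proof.
  rewrite !Ccv_iff; intros [a b]; split; simpl.
  - apply (is_lim_seq_scal_l _ (-1)) in a. simpl in a.
    eapply is_lim_seq_ext. 2: replace (- Re l) with (-1 * Re l) by ring; exact a. intro; simpl; ring.
  - apply (is_lim_seq_scal_l _ (-1)) in b. simpl in b.
    eapply is_lim_seq_ext. 2: replace (- Im l) with (-1 * Im l) by ring; exact b. intro; simpl; ring.
Qed.

Lemma Ccv_sub u v l m : Ccv u l -> Ccv v m -> Ccv (fun n => Csub (u n) (v n)) (Csub l m).
Proof. intros; apply Ccv_add; auto; apply Ccv_opp; auto. Qed.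

Lemma Ccv_mul u v l m : Ccv u l -> Ccv v m -> Ccv (fun n => Cmul (u n) (v n)) (Cmul l m).
Proof.
  rewrite !Ccv_iff; intros [a b] [c d]; split; simpl.
  - apply is_lim_seq_minus'; apply is_lim_seq_mult'; auto.
  - apply is_lim_seq_plus'; apply is_lim_seq_mult'; auto.
Qed.

Lemma Ccv_inv u l : Ccv u l -> l <> Cx0 -> Ccv (fun n => Cinv (u n)) (Cinv l).
Proof.
  intros H Hl. assert (Hd : Re l * Re l + Im l * Im l <> 0).
  { intro E. apply Hl. destruct l as [x y]; simpl in *. apply Cx_ext; simpl; nra. }
  rewrite !Ccv_iff in *. destruct H as [a b].
  assert (D : is_lim_seq (fun n => Re (u n) * Re (u n) + Im (u n) * Im (u n)) (Re l * Re l + Im l * Im l)).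
  { apply is_lim_seq_plus'; apply is_lim_seq_mult'; auto. }
  split; simpl; apply is_lim_seq_div'; auto.
  apply (is_lim_seq_scal_l _ (-1)) in b. simpl in b.
  eapply is_lim_seq_ext. 2: replace (- Im l) with (-1 * Im l) by ring; exact b. intro; simpl; ring.
Qed.

Lemma Ccv_div u v l m : Ccv u l -> Ccv v m -> m <> Cx0 -> Ccv (fun n => Cdiv (u n) (v n)) (Cdiv l m).
Proof. intros; apply Ccv_mul; auto; apply Ccv_inv; auto. Qed.

Lemma Ccv_ext_loc u v l N : (forall n, (N <= n)%nat -> u n = v n) -> Ccv u l -> Ccv v l.
Proof.
  rewrite !Ccv_iff; intros E [a b]; split.
  - eapply is_lim_seq_ext_loc. 2: exact a. exists N. intros n Hn. simpl. rewrite (E n Hn). reflexivity.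
  - eapply is_lim_seq_ext_loc. 2: exact b. exists N. intros n Hn. simpl. rewrite (E n Hn). reflexivity.
Qed.

Lemma Ccv_ext u v l : (forall n, u n = v n) -> Ccv u l -> Ccv v l.
Proof. intros E; apply (Ccv_ext_loc u v l 0); auto. Qed.

Lemma Ccv_incr u l k : Ccv u l <-> Ccv (fun n => u (n + k)%nat) l.
Proof.
  rewrite !Ccv_iff. rewrite (is_lim_seq_incr_n (fun n => Re (u n)) k).
  rewrite (is_lim_seq_incr_n (fun n => Im (u n)) k). tauto.
Qed.

Lemma Nm_le_sum z : Nm z <= Rabs (Re z) + Rabs (Im z).
Proof.
  unfold Nm, Cmod, tc; simpl.
  rewrite <- (sqrt_Rsqr (Rabs (Re z) + Rabs (Im z))).
  2: { generalize (Rabs_pos (Re z)) (Rabs_pos (Im z)); lra. }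
  apply sqrt_le_1_alt. unfold Rsqr.
  assert (E1 := pow2_abs (Re z)). assert (E2 := pow2_abs (Im z)).
  generalize (Rabs_pos (Re z)) (Rabs_pos (Im z)). simpl in *. nra.
Qed.

Lemma Ccv_Nm u l : Ccv u l <-> is_lim_seq (fun n => Nm (Csub (u n) l)) 0.
Proof.
  split.
  - rewrite Ccv_iff. intros [a b].
    apply (is_lim_seq_le_le (fun _ => 0) _ (fun n => Rabs (Re (u n) - Re l) + Rabs (Im (u n) - Im l))).
    + intro n. split. apply Nm_ge0. apply Nm_le_sum.
    + apply is_lim_seq_const.
    + replace 0 with (0 + 0) by ring. apply is_lim_seq_plus'.
      * assert (X := is_lim_seq_abs (fun n => Re (u n) - Re l) 0). simpl in X. rewrite Rabs_R0 in X. apply X.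
        replace (Finite 0) with (Finite (Re l - Re l)) by (f_equal; ring).
        apply is_lim_seq_minus'; auto. apply is_lim_seq_const.
      * assert (X := is_lim_seq_abs (fun n => Im (u n) - Im l) 0). simpl in X. rewrite Rabs_R0 in X. apply X.
        replace (Finite 0) with (Finite (Im l - Im l)) by (f_equal; ring).
        apply is_lim_seq_minus'; auto. apply is_lim_seq_const.
  - intro H. rewrite Ccv_iff. split.
    + assert (is_lim_seq (fun n => Re (u n) - Re l) 0).
      { apply is_lim_seq_abs_0.
        apply (is_lim_seq_le_le (fun _ => 0) _ (fun n => Nm (Csub (u n) l)) _); [|apply is_lim_seq_const|exact H].
        intro n; split. apply Rabs_pos. apply (Nm_Re (Csub (u n) l)). }
      apply (is_lim_seq_plus' _ (fun _ => Re l) 0 (Re l)) in H0; [|apply is_lim_seq_const].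
      eapply is_lim_seq_ext. 2: replace (Re l) with (0 + Re l) by ring; exact H0. intro; simpl; ring.
    + assert (is_lim_seq (fun n => Im (u n) - Im l) 0).
      { apply is_lim_seq_abs_0.
        apply (is_lim_seq_le_le (fun _ => 0) _ (fun n => Nm (Csub (u n) l)) _); [|apply is_lim_seq_const|exact H].
        intro n; split. apply Rabs_pos. apply (Nm_Im (Csub (u n) l)). }
      apply (is_lim_seq_plus' _ (fun _ => Im l) 0 (Im l)) in H0; [|apply is_lim_seq_const].
      eapply is_lim_seq_ext. 2: replace (Im l) with (0 + Im l) by ring; exact H0. intro; simpl; ring.
Qed.

Lemma Ccv_squeeze u l e : (forall n, Nm (Csub (u n) l) <= e n) -> is_lim_seq e 0 -> Ccv u l.
Proof.
  intros H He. apply Ccv_Nm. apply (is_lim_seq_le_le (fun _ => 0) _ e); auto.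
  intro n; split; auto. apply Nm_ge0. apply is_lim_seq_const.
Qed.

Lemma Ccv_bound u l c B N : Ccv u l -> (forall n, (N <= n)%nat -> Nm (Csub (u n) c) <= B) -> Nm (Csub l c) <= B.
Proof.
  intros H Hb. apply Ccv_Nm in H.
  apply Rnot_lt_le; intro Hlt.
  set (eps := Nm (Csub l c) - B).
  assert (Heps : 0 < eps) by (unfold eps; lra).
  apply is_lim_seq_Reals in H. destruct (H eps Heps) as [M HM].
  specialize (HM (max M N) (Nat.le_max_l _ _)). specialize (Hb (max M N) (Nat.le_max_r _ _)).
  unfold Rdist in HM. rewrite Rminus_0_r, Rabs_pos_eq in HM by apply Nm_ge0.
  assert (T := Nm_add (Csub l (u (max M N))) (Csub (u (max M N)) c)).
  replace (Cadd (Csub l (u (max M N))) (Csub (u (max M N)) c)) with (Csub l c) in T by field.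
  replace (Csub l (u (max M N))) with (Copp (Csub (u (max M N)) l)) in T by field.
  rewrite Nm_opp in T. unfold eps in HM. lra.
Qed.
Lemma real_geom_step (v : nat -> R) K r : 0 <= r < 1 ->
  (forall n, Rabs (v (S n) - v n) <= K * r ^ n) -> exists l : R, is_lim_seq v l.
Proof.
  intros Hr H.
  assert (E : ex_series (fun n => v (S n) - v n)).
  { apply (@ex_series_le R_AbsRing R_CompleteNormedModule _ (fun n => K * r ^ n)).
    - intro n. apply H.
    - apply (ex_series_ext (fun n => r ^ n * K)). intro; simpl; ring.
      apply ex_series_scal_r. apply ex_series_geom. rewrite Rabs_pos_eq; lra. }
  destruct E as [L HL].
  exists (L + v O).
  apply is_lim_seq_incr_1.
  assert (S0 : forall n, sum_n (fun n => v (S n) - v n) n = v (S n) - v O).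
  { induction n. rewrite sum_O. reflexivity. rewrite sum_Sn, IHn. unfold plus; simpl. ring. }
  apply (is_lim_seq_ext (fun n => sum_n (fun n => v (S n) - v n) n + v O)).
  { intro n. rewrite S0. ring. }
  apply is_lim_seq_plus'. apply HL. apply is_lim_seq_const.
Qed.

Lemma Ccv_geom_step (u : nat -> Cx) K r : 0 <= r < 1 ->
  (forall n, Nm (Csub (u (S n)) (u n)) <= K * r ^ n) -> exists l, Ccv u l.
Proof.
  intros Hr H.
  destruct (real_geom_step (fun n => Re (u n)) K r Hr) as [a Ha].
  { intro n. eapply Rle_trans. 2: apply H. apply (Nm_Re (Csub (u (S n)) (u n))). }
  destruct (real_geom_step (fun n => Im (u n)) K r Hr) as [b Hb].
  { intro n. eapply Rle_trans. 2: apply H. apply (Nm_Im (Csub (u (S n)) (u n))). }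
  exists (Cmk a b). apply Ccv_iff. simpl. split; auto.
Qed.

Fixpoint Rsum (N : nat) (f : nat -> R) : R :=
  match N with O => 0 | S n => Rsum n f + f n end.

Lemma Nm_Csum N f b : (forall n, Nm (f n) <= b n) -> Nm (Csum N f) <= Rsum N b.
Proof.
  intro H. induction N; simpl.
  - unfold Cx0. rewrite Nm_RtoC, Rabs_R0. lra.
  - eapply Rle_trans. apply Nm_add. specialize (H N). lra.
Qed.

Lemma Rsum_geom N K g : g <> 1 -> Rsum N (fun n => K * g ^ n) = K * (1 - g ^ N) / (1 - g).
Proof.
  intro Hg. assert (1 - g <> 0) by lra. induction N; simpl. field; auto.
  rewrite IHN. field; auto.
Qed.

Lemma Rsum_geom_le N K g : 0 <= K -> 0 <= g < 1 -> Rsum N (fun n => K * g ^ n) <= K / (1 - g).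
Proof.
  intros HK Hg. rewrite Rsum_geom by lra.
  unfold Rdiv. apply Rmult_le_compat_r. apply Rlt_le, Rinv_0_lt_compat; lra.
  assert (0 <= g ^ N) by (apply pow_le; lra). nra.
Qed.

Lemma Csum_shift N f : Csum (S N) f = Cadd (f O) (Csum N (fun n => f (S n))).
Proof. induction N. simpl. field. change (Csum (S (S N)) f) with (Cadd (Csum (S N) f) (f (S N))). rewrite IHN. simpl. field. Qed.

Lemma Csum_ext N f g : (forall n, f n = g n) -> Csum N f = Csum N g.
Proof. intro H; induction N; simpl; auto. rewrite IHN, H; auto. Qed.

Lemma Cprod_ext N f g : (forall n, f n = g n) -> Cprod N f = Cprod N g.
Proof. intro H; induction N; simpl; auto. rewrite IHN, H; auto. Qed.

Lemma Csum_series_cv f K r : 0 <= r < 1 -> (forall n, Nm (f n) <= K * r ^ n) ->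
  exists l, Ccv (fun N => Csum N f) l.
Proof.
  intros Hr H. apply (Ccv_geom_step _ K r Hr). intro n. simpl.
  replace (Csub (Cadd (Csum n f) (f n)) (Csum n f)) with (f n) by field. auto.
Qed.
Definition Cpow (z : Cx) (n : nat) : Cx := Cprod n (fun _ => z).

Lemma Cexp_add z w : Cexp (Cadd z w) = Cmul (Cexp z) (Cexp w).
Proof.
  destruct z as [a b], w as [c d]. unfold Cexp, Cadd, Cmul; simpl.
  rewrite exp_plus, cos_plus, sin_plus. apply Cx_ext; simpl; ring.
Qed.
Lemma Cexp_RtoC r : Cexp (RtoC r) = RtoC (exp r).
Proof. unfold Cexp, RtoC; simpl. rewrite cos_0, sin_0. apply Cx_ext; simpl; ring. Qed.
Lemma Cexp_0 : Cexp Cx0 = Cx1.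
Proof. unfold Cx0. rewrite Cexp_RtoC, exp_0. reflexivity. Qed.
Lemma Nm_Cexp z : Nm (Cexp z) = exp (Re z).
Proof.
  unfold Nm, Cmod, tc, Cexp. transitivity (sqrt (exp (Re z) ^ 2)).
  - f_equal. rewrite <- (Rmult_1_r (exp (Re z) ^ 2)). rewrite <- (sin2_cos2 (Im z)). unfold Rsqr. simpl. ring.
  - apply sqrt_pow2. apply Rlt_le, exp_pos.
Qed.
Lemma Cexp_neq0 z : Cexp z <> Cx0.
Proof. intro E. assert (H := Nm_Cexp z). rewrite E in H. unfold Cx0 in H. rewrite Nm_RtoC, Rabs_R0 in H. generalize (exp_pos (Re z)); lra. Qed.
Lemma Cexp_opp z : Cexp (Copp z) = Cinv (Cexp z).
Proof.
  assert (H := Cexp_add z (Copp z)). replace (Cadd z (Copp z)) with Cx0 in H by field.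
  rewrite Cexp_0 in H. assert (Hz := Cexp_neq0 z).
  apply (f_equal (fun t => Cmul t (Cinv (Cexp z)))) in H.
  replace (Cmul (Cmul (Cexp z) (Cexp (Copp z))) (Cinv (Cexp z))) with (Cexp (Copp z)) in H by (field; auto).
  rewrite <- H. field; auto.
Qed.
Lemma Cexp_sub z w : Cexp (Csub z w) = Cdiv (Cexp z) (Cexp w).
Proof. unfold Csub, Cdiv. rewrite Cexp_add, Cexp_opp. reflexivity. Qed.
Lemma Cexp_nat n z : Cexp (Cmul (RtoC (INR n)) z) = Cpow (Cexp z) n.
Proof.
  induction n. change (INR 0) with 0. rewrite RtoC_0. replace (Cmul Cx0 z) with Cx0 by field. apply Cexp_0.
  rewrite S_INR, RtoC_add, RtoC_1. replace (Cmul (Cadd (RtoC (INR n)) Cx1) z) with (Cadd (Cmul (RtoC (INR n)) z) z) by field.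
  rewrite Cexp_add, IHn. reflexivity.
Qed.
Lemma exp_nat n y : exp (INR n * y) = exp y ^ n.
Proof. induction n. simpl. rewrite Rmult_0_l. apply exp_0. rewrite S_INR. replace ((INR n + 1) * y) with (INR n * y + y) by ring. rewrite exp_plus, IHn. simpl. ring. Qed.
Lemma Cpow_RtoC r n : Cpow (RtoC r) n = RtoC (r ^ n).
Proof. unfold Cpow. rewrite RtoC_pow. reflexivity. Qed.
Lemma Cpow_S z n : Cpow z (S n) = Cmul (Cpow z n) z. Proof. reflexivity. Qed.
Lemma Nm_Cpow z n : Nm (Cpow z n) = Nm z ^ n.
Proof. induction n. simpl. apply Nm_one. rewrite Cpow_S, Nm_mul, IHn. simpl; ring. Qed.
Lemma Cpow_mul z w n : Cpow (Cmul z w) n = Cmul (Cpow z n) (Cpow w n).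
Proof. induction n. unfold Cpow; cbn [Cprod]; field. rewrite !Cpow_S, IHn. field. Qed.
Lemma Cpow_add z n m : Cpow z (n + m) = Cmul (Cpow z n) (Cpow z m).
Proof. induction m. rewrite Nat.add_0_r. change (Cpow z 0) with Cx1. field. rewrite Nat.add_succ_r, !Cpow_S, IHm. field. Qed.
Lemma Cpow_neq0 z n : z <> Cx0 -> Cpow z n <> Cx0.
Proof. intros Hz E. assert (H := Nm_Cpow z n). rewrite E in H. unfold Cx0 in H. rewrite Nm_RtoC, Rabs_R0 in H. assert (0 < Nm z ^ n) by (apply pow_lt, Nm_pos; auto). lra. Qed.

Lemma qpow_add q x y : qpow q (Cadd x y) = Cmul (qpow q x) (qpow q y).
Proof. unfold qpow. rewrite <- Cexp_add. f_equal. field. Qed.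
Lemma qpow_sub q x y : qpow q (Csub x y) = Cdiv (qpow q x) (qpow q y).
Proof. unfold qpow. rewrite <- Cexp_sub. f_equal. field. Qed.
Lemma qpow_neq0 q x : qpow q x <> Cx0. Proof. apply Cexp_neq0. Qed.
Lemma qpow_RtoC q r : 0 < q -> qpow q (RtoC r) = RtoC (Rpower q r).
Proof. intros. unfold qpow. rewrite <- RtoC_mul, Cexp_RtoC. unfold Rpower. f_equal. f_equal. ring. Qed.
Lemma qpow_nat q n x : qpow q (Cmul (RtoC (INR n)) x) = Cpow (qpow q x) n.
Proof. unfold qpow. rewrite <- Cexp_nat. f_equal. field. Qed.
Lemma Rpower_nat q n : 0 < q -> Rpower q (INR n) = q ^ n.
Proof. intros. unfold Rpower. rewrite exp_nat, exp_ln; auto. Qed.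
Lemma Nm_qpow q x : 0 < q -> Nm (qpow q x) = exp (ln q * Re x).
Proof. intros. unfold qpow. rewrite Nm_Cexp. f_equal. simpl. ring. Qed.
Lemma pow_le_one p n : 0 <= p <= 1 -> p ^ n <= 1.
Proof. intro H. induction n; simpl. lra. assert (0 <= p ^ n) by (apply pow_le; lra). nra. Qed.

Lemma exp_mono_le x y : x <= y -> exp x <= exp y.
Proof. intro H. destruct H. apply Rlt_le, exp_increasing; auto. subst; lra. Qed.

Definition pp (p : R) (w : Cx) (n : nat) : Cx :=
  Cprod n (fun k => Csub Cx1 (Cmul w (RtoC (p ^ k)))).

Lemma pp_S p w n : pp p w (S n) = Cmul (pp p w n) (Csub Cx1 (Cmul w (RtoC (p ^ n)))).
Proof. reflexivity. Qed.

Lemma pp_split p w n m : pp p w (n + m) = Cmul (pp p w n) (pp p (Cmul w (RtoC (p ^ n))) m).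
Proof.
  induction m. rewrite Nat.add_0_r. change (pp p (Cmul w (RtoC (p ^ n))) 0) with Cx1. field.
  rewrite Nat.add_succ_r, !pp_S, IHm, pow_add, RtoC_mul. field.
Qed.

Lemma Rsum_pow_le p n : 0 <= p < 1 -> Rsum n (fun k => p ^ k) <= 1 / (1 - p).
Proof.
  intro Hp. assert (H := Rsum_geom_le n 1 p). 
  replace (Rsum n (fun k => p ^ k)) with (Rsum n (fun k => 1 * p ^ k)). apply H; lra.
  clear H. induction n; simpl; auto. rewrite IHn. ring.
Qed.

Lemma Rsum_ge0 n f : (forall k, 0 <= f k) -> 0 <= Rsum n f.
Proof. intro H; induction n; simpl. lra. specialize (H n). lra. Qed.

Lemma pp_upper p w n : 0 < p < 1 -> Nm (pp p w n) <= exp (Nm w / (1 - p)).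
Proof.
  intro Hp.
  assert (G : Nm (pp p w n) <= exp (Nm w * Rsum n (fun k => p ^ k))).
  { induction n. simpl Rsum. rewrite Rmult_0_r, exp_0. unfold pp; simpl. rewrite Nm_one; lra.
    rewrite pp_S, Nm_mul. simpl Rsum. rewrite Rmult_plus_distr_l, exp_plus.
    apply Rmult_le_compat; try apply Nm_ge0; auto.
    eapply Rle_trans. apply Nm_sub. rewrite Nm_one, Nm_mul, Nm_RtoC, Rabs_pos_eq.
    2: apply pow_le; lra. eapply Rle_trans. 2: apply exp_ineq1_le. lra. }
  eapply Rle_trans. apply G. apply exp_mono_le.
  assert (H := Rsum_pow_le p n). unfold Rdiv in *. rewrite Rmult_1_l in H.
  apply Rmult_le_compat_l. apply Nm_ge0. apply H; lra.
Qed.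

Lemma one_minus_ge_exp x th : 0 <= x <= th -> th < 1 -> exp (- (x / (1 - th))) <= 1 - x.
Proof.
  intros Hx Hth.
  assert (A : 1 + x / (1 - th) <= exp (x / (1 - th))) by apply exp_ineq1_le.
  assert (B : 1 / (1 - x) <= 1 + x / (1 - th)).
  { assert (x / (1 - x) <= x / (1 - th)).
    { unfold Rdiv. apply Rmult_le_compat_l. lra. apply Rinv_le_contravar; lra. }
    replace (1 / (1 - x)) with (1 + x / (1 - x)) by (field; lra). lra. }
  rewrite exp_Ropp. 
  replace (1 - x) with (/ (1 / (1 - x))) by (field; lra).
  apply Rinv_le_contravar. apply Rdiv_lt_0_compat; lra. lra.
Qed.

Lemma pp_lower p w n th : 0 < p < 1 -> Nm w <= th -> th < 1 ->
  exp (- (Nm w / ((1 - th) * (1 - p)))) <= Nm (pp p w n).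
Proof.
  intros Hp Hw Hth.
  assert (G : exp (- (Nm w * Rsum n (fun k => p ^ k) / (1 - th))) <= Nm (pp p w n)).
  { induction n. simpl Rsum. unfold pp; simpl. rewrite Nm_one. replace (- (Nm w * 0 / (1 - th))) with 0 by (field; lra). rewrite exp_0; lra.
    rewrite pp_S, Nm_mul. simpl Rsum.
    replace (- (Nm w * (Rsum n (fun k => p ^ k) + p ^ n) / (1 - th))) with
       ((- (Nm w * Rsum n (fun k => p ^ k) / (1 - th))) + (- (Nm w * p ^ n / (1 - th)))) by (field; lra).
    rewrite exp_plus.
    apply Rmult_le_compat; try (apply Rlt_le, exp_pos); auto.
    assert (Hpk : 0 <= p ^ n <= 1). { split. apply pow_le; lra. apply pow_le_one; lra. }
    assert (Hx : 0 <= Nm w * p ^ n <= th).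
    { split. apply Rmult_le_pos. apply Nm_ge0. lra. generalize (Nm_ge0 w); nra. }
    eapply Rle_trans. apply (one_minus_ge_exp _ th Hx Hth).
    assert (T := Nm_sub_ge Cx1 (Cmul w (RtoC (p ^ n)))).
    rewrite Nm_one, Nm_mul, Nm_RtoC, Rabs_pos_eq in T by lra. lra. }
  eapply Rle_trans. 2: apply G. apply exp_mono_le. apply Ropp_le_contravar.
  assert (H := Rsum_pow_le p n). 
  assert (0 <= Rsum n (fun k => p ^ k)) by (apply Rsum_ge0; intro; apply pow_le; lra).
  assert (0 < 1 - th) by lra. assert (0 < 1 - p) by lra.
  replace (Nm w / ((1 - th) * (1 - p))) with (Nm w * (1 / (1 - p)) / (1 - th)) by (field; lra).
  unfold Rdiv. apply Rmult_le_compat_r. apply Rlt_le, Rinv_0_lt_compat; lra.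
  apply Rmult_le_compat_l. apply Nm_ge0. apply H; lra.
Qed.

Lemma pp_cv p w : 0 < p < 1 -> exists l, Ccv (pp p w) l.
Proof.
  intro Hp. apply (Ccv_geom_step _ (exp (Nm w / (1 - p)) * Nm w) p). lra.
  intro n. rewrite pp_S.
  replace (Csub (Cmul (pp p w n) (Csub Cx1 (Cmul w (RtoC (p ^ n))))) (pp p w n))
    with (Copp (Cmul (pp p w n) (Cmul w (RtoC (p ^ n))))) by field.
  rewrite Nm_opp, !Nm_mul, Nm_RtoC, Rabs_pos_eq by (apply pow_le; lra).
  rewrite Rmult_assoc. apply Rmult_le_compat_r.
  apply Rmult_le_pos. apply Nm_ge0. apply pow_le; lra. apply pp_upper; auto.
Qed.

Definition PP (p : R) (w : Cx) : Cx := qpoch_inf w p.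

Lemma PP_cv p w : 0 < p < 1 -> Ccv (pp p w) (PP p w).
Proof.
  intro Hp. destruct (pp_cv p w Hp) as [l Hl].
  unfold PP, qpoch_inf. fold (pp p w). rewrite (Clim_eq _ l Hl). auto.
Qed.

Lemma PP_split p w n : 0 < p < 1 -> PP p w = Cmul (pp p w n) (PP p (Cmul w (RtoC (p ^ n)))).
Proof.
  intro Hp. apply (Ccv_unique (fun m => pp p w (m + n))).
  - apply Ccv_incr. apply PP_cv; auto.
  - apply (Ccv_ext (fun m => Cmul (pp p w n) (pp p (Cmul w (RtoC (p ^ n))) m))).
    intro m. rewrite Nat.add_comm, pp_split. auto.
    apply Ccv_mul. apply Ccv_const. apply PP_cv; auto.
Qed.

Lemma Ccv_lower u l L : Ccv u l -> (forall n, L <= Nm (u n)) -> L <= Nm l.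
Proof.
  intros H Hb. apply Rnot_lt_le. intro Hlt. apply Ccv_Nm in H. apply is_lim_seq_Reals in H.
  destruct (H (L - Nm l)) as [N HN]. lra.
  specialize (HN N (le_n _)). specialize (Hb N). unfold Rdist in HN.
  rewrite Rminus_0_r, Rabs_pos_eq in HN by apply Nm_ge0.
  assert (T := Nm_add (Csub (u N) l) l). replace (Cadd (Csub (u N) l) l) with (u N) in T by field. lra.
Qed.

Lemma PP_lower p w th : 0 < p < 1 -> Nm w <= th -> th < 1 ->
  exp (- (Nm w / ((1 - th) * (1 - p)))) <= Nm (PP p w).
Proof. intros. apply (Ccv_lower (pp p w)). apply PP_cv; auto. intro; apply pp_lower; auto. Qed.

Lemma small_pow p c e : 0 < p < 1 -> 0 < e -> exists N, forall n, (N <= n)%nat -> c * p ^ n < e.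
Proof.
  intros Hp He. destruct (pow_lt_1_zero p) with (y := e / (Rabs c + 1)) as [N HN].
  rewrite Rabs_pos_eq; lra. apply Rdiv_lt_0_compat; auto. generalize (Rabs_pos c); lra.
  exists N. intros n Hn. specialize (HN n Hn). rewrite Rabs_pos_eq in HN by (apply pow_le; lra).
  assert (0 <= p ^ n) by (apply pow_le; lra).
  assert (Hc : c <= Rabs c) by apply Rle_abs.
  assert (Rabs c * p ^ n <= Rabs c * (e / (Rabs c + 1))). { apply Rmult_le_compat_l. apply Rabs_pos. lra. }
  assert (Rabs c * (e / (Rabs c + 1)) < e).
  { assert (0 <= Rabs c) by apply Rabs_pos. unfold Rdiv.
    replace (Rabs c * (e * / (Rabs c + 1))) with (e * (Rabs c / (Rabs c + 1))) by (field; lra).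
    assert (Rabs c / (Rabs c + 1) < 1). { apply (Rmult_lt_reg_r (Rabs c + 1)). lra. unfold Rdiv. rewrite Rmult_assoc, Rinv_l; lra. }
    nra. }
  nra.
Qed.

Lemma Nm_0 : Nm Cx0 = 0. Proof. unfold Cx0. rewrite Nm_RtoC. apply Rabs_R0. Qed.

Definition good (p : R) (w : Cx) : Prop := forall k, Cmul w (RtoC (p ^ k)) <> Cx1.

Lemma pp_neq0 p w n : good p w -> pp p w n <> Cx0.
Proof.
  intro G. induction n. unfold pp; simpl. intro E. apply (f_equal Re) in E. simpl in E. lra.
  rewrite pp_S. intro E. apply (f_equal Nm) in E. rewrite Nm_mul, Nm_0 in E. apply Rmult_integral in E.
  destruct E as [E|E]. apply IHn, Nm_eq0; auto.
  apply Nm_eq0 in E. apply (G n). replace (Cmul w (RtoC (p ^ n))) with (Csub Cx1 (Csub Cx1 (Cmul w (RtoC (p ^ n))))) by field.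
  rewrite E. field.
Qed.

Lemma PP_neq0 p w : 0 < p < 1 -> good p w -> PP p w <> Cx0.
Proof.
  intros Hp G. destruct (small_pow p (Nm w) (1/2) Hp) as [N HN]. lra.
  rewrite (PP_split p w N Hp). intro E. apply (f_equal Nm) in E. rewrite Nm_mul, Nm_0 in E. apply Rmult_integral in E.
  destruct E as [E|E]. apply (pp_neq0 p w N G), Nm_eq0; auto.
  assert (Hw : Nm (Cmul w (RtoC (p ^ N))) <= 1/2).
  { rewrite Nm_mul, Nm_RtoC, Rabs_pos_eq by (apply pow_le; lra). left; apply HN; auto. }
  assert (T := PP_lower p _ (1/2) Hp Hw ltac:(lra)). rewrite E in T. generalize (exp_pos (- (Nm (Cmul w (RtoC (p ^ N))) / ((1 - 1 / 2) * (1 - p))))). lra.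
Qed.
Lemma pp_lower_fin p w N : good p w -> exists d, 0 < d /\ forall n, (n <= N)%nat -> d <= Nm (pp p w n).
Proof.
  intro G. induction N.
  - exists 1. split. lra. intros n Hn. inversion Hn. unfold pp; simpl. rewrite Nm_one. lra.
  - destruct IHN as [d [Hd H]]. exists (Rmin d (Nm (pp p w (S N)))). split.
    + apply Rmin_pos; auto. apply Nm_pos, pp_neq0; auto.
    + intros n Hn. destruct (Nat.eq_dec n (S N)). subst. apply Rmin_r.
      eapply Rle_trans. apply Rmin_l. apply H. lia.
Qed.

Lemma pp_lower_unif p w : 0 < p < 1 -> good p w -> exists d, 0 < d /\ forall n, d <= Nm (pp p w n).
Proof.
  intros Hp G. destruct (small_pow p (Nm w) (1/2) Hp) as [N HN]. lra.
  destruct (pp_lower_fin p w N G) as [d [Hd H]].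
  set (c := exp (- (Nm (Cmul w (RtoC (p ^ N))) / ((1 - 1/2) * (1 - p))))).
  assert (Hc0 : 0 < c) by apply exp_pos.
  assert (Hc1 : c <= 1).
  { unfold c. apply Rle_trans with (exp 0); [|rewrite exp_0; lra]. apply exp_mono_le.
    assert (0 <= Nm (Cmul w (RtoC (p ^ N))) / ((1 - 1 / 2) * (1 - p))).
    { apply Rdiv_le_0_compat. apply Nm_ge0. apply Rmult_lt_0_compat; lra. } lra. }
  exists (d * c). split. nra. intro n.
  destruct (Compare_dec.le_lt_dec n N).
  - specialize (H n l). nra.
  - replace n with (N + (n - N))%nat by lia. rewrite pp_split, Nm_mul.
    apply Rmult_le_compat; try lra. apply H; lia.
    apply pp_lower; try lra. rewrite Nm_mul, Nm_RtoC, Rabs_pos_eq by (apply pow_le; lra). left; apply HN; auto.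
Qed.
Definition tt (p : R) (A B C : Cx) (n : nat) : Cx :=
  Cmul (Cdiv (Cmul (pp p A n) (pp p B n)) (Cmul (pp p (RtoC p) n) (pp p C n)))
       (Cpow (Cdiv C (Cmul A B)) n).

Lemma good_p p : 0 < p < 1 -> good p (RtoC p).
Proof.
  intros Hp k E. apply (f_equal Re) in E. simpl in E.
  assert (p ^ S k < 1). { simpl. assert (p ^ k <= 1) by (apply pow_le_one; lra). assert (0 <= p ^ k) by (apply pow_le; lra). nra. }
  simpl in H. lra.
Qed.

Lemma good_1 p w : good p w -> Csub Cx1 w <> Cx0.
Proof. intros G E. apply (G 0%nat). simpl. replace (Cmul w (RtoC 1)) with w by (rewrite RtoC_1; field). 
  replace w with (Csub Cx1 (Csub Cx1 w)) by field. rewrite E. field. Qed.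

Lemma good_k p w k : good p w -> Csub Cx1 (Cmul w (RtoC (p ^ k))) <> Cx0.
Proof. intros G E. apply (G k). replace (Cmul w (RtoC (p ^ k))) with (Csub Cx1 (Csub Cx1 (Cmul w (RtoC (p ^ k))))) by field. rewrite E. field. Qed.

Lemma good_shift p w m : good p w -> good p (Cmul w (RtoC (p ^ m))).
Proof. intros G k E. apply (G (m + k)%nat). rewrite pow_add, RtoC_mul. rewrite <- E. field. Qed.

Lemma pp_shift1 p w n : pp p w (S n) = Cmul (Csub Cx1 w) (pp p (Cmul w (RtoC p)) n).
Proof.
  change (S n) with (1 + n)%nat. rewrite pp_split. rewrite pow_1. f_equal.
  unfold pp; simpl. rewrite RtoC_1. field.
Qed.

Lemma tt_S p A B C n : 0 < p < 1 -> A <> Cx0 -> B <> Cx0 -> good p C ->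
  tt p A B C (S n) = Cmul (tt p A B C n)
     (Cdiv (Cmul (Cmul (Csub Cx1 (Cmul A (RtoC (p ^ n)))) (Csub Cx1 (Cmul B (RtoC (p ^ n))))) (Cdiv C (Cmul A B)))
           (Cmul (Csub Cx1 (Cmul (RtoC p) (RtoC (p ^ n)))) (Csub Cx1 (Cmul C (RtoC (p ^ n)))))).
Proof.
  intros Hp HA HB G. unfold tt. rewrite !pp_S, Cpow_S.
  assert (H1 := pp_neq0 p (RtoC p) n (good_p p Hp)). assert (H2 := pp_neq0 p C n G).
  assert (H3 := good_k p (RtoC p) n (good_p p Hp)). assert (H4 := good_k p C n G).
  field. repeat split; auto.
Qed.

Lemma tt_Cp p A B C n : 0 < p < 1 -> A <> Cx0 -> B <> Cx0 -> good p C ->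
  tt p A B (Cmul C (RtoC p)) n = Cmul (tt p A B C n)
     (Cdiv (Cmul (Csub Cx1 C) (RtoC (p ^ n))) (Csub Cx1 (Cmul C (RtoC (p ^ n))))).
Proof.
  intros Hp HA HB G. unfold tt.
  assert (E : pp p (Cmul C (RtoC p)) n = Cdiv (Cmul (pp p C n) (Csub Cx1 (Cmul C (RtoC (p ^ n))))) (Csub Cx1 C)).
  { rewrite <- pp_S, pp_shift1. field. apply good_1 with p; auto. }
  rewrite E.
  replace (Cdiv (Cmul C (RtoC p)) (Cmul A B)) with (Cmul (Cdiv C (Cmul A B)) (RtoC p)) by (field; auto).
  rewrite Cpow_mul, Cpow_RtoC.
  assert (H1 := pp_neq0 p (RtoC p) n (good_p p Hp)). assert (H2 := pp_neq0 p C n G).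
  assert (H4 := good_k p C n G). assert (H5 := good_1 p C G).
  field. repeat split; auto.
Qed.

Lemma tt_0 p A B C : tt p A B C 0 = Cx1.
Proof. unfold tt, pp, Cpow. cbn [Cprod]. field. intro E; apply (f_equal Re) in E; simpl in E; lra. Qed.

Lemma partial_contig p A B C M : 0 < p < 1 -> A <> Cx0 -> B <> Cx0 -> good p C ->
  Csub (Cmul (Cmul (Csub Cx1 C) (Csub Cx1 (Cdiv C (Cmul A B)))) (Csum M (tt p A B C)))
       (Cmul (Cmul (Csub Cx1 (Cdiv C A)) (Csub Cx1 (Cdiv C B))) (Csum M (tt p A B (Cmul C (RtoC p)))))
  = Copp (Cmul (Cmul (Csub Cx1 C) (Csub Cx1 (RtoC (p ^ M)))) (tt p A B C M)).
Proof.
  intros Hp HA HB G. induction M as [|M IHM].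
  - cbn [Csum pow]. rewrite RtoC_1, tt_0. field; auto.
  - cbn [Csum].
    assert (IH' : forall X Y : Cx, Csub (Cmul (Cmul (Csub Cx1 C) (Csub Cx1 (Cdiv C (Cmul A B)))) (Cadd (Csum M (tt p A B C)) X))
       (Cmul (Cmul (Csub Cx1 (Cdiv C A)) (Csub Cx1 (Cdiv C B))) (Cadd (Csum M (tt p A B (Cmul C (RtoC p)))) Y))
       = Cadd (Copp (Cmul (Cmul (Csub Cx1 C) (Csub Cx1 (RtoC (p ^ M)))) (tt p A B C M)))
          (Csub (Cmul (Cmul (Csub Cx1 C) (Csub Cx1 (Cdiv C (Cmul A B)))) X) (Cmul (Cmul (Csub Cx1 (Cdiv C A)) (Csub Cx1 (Cdiv C B))) Y))).
    { intros. rewrite <- IHM. field; auto. }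
    rewrite IH'. rewrite tt_S, tt_Cp by auto.
    replace (RtoC (p ^ S M)) with (Cmul (RtoC p) (RtoC (p ^ M))) by (simpl; rewrite RtoC_mul; auto).
    assert (H1 := good_k p (RtoC p) M (good_p p Hp)). assert (H2 := good_k p C M G).
    field. repeat split; auto.
Qed.
Definition dp (p : R) : R := exp (- (p / ((1 - p) * (1 - p)))).

Lemma pp_p_lower p n : 0 < p < 1 -> dp p <= Nm (pp p (RtoC p) n).
Proof.
  intro Hp. unfold dp. assert (H := pp_lower p (RtoC p) n p Hp).
  rewrite Nm_RtoC, Rabs_pos_eq in H by lra. apply H; lra.
Qed.

Definition Kt (p : R) (A B : Cx) (d : R) : R :=
  exp (Nm A / (1 - p)) * exp (Nm B / (1 - p)) / (dp p * d).

Lemma tt_bound p A B C d n : 0 < p < 1 -> 0 < d -> (forall n, d <= Nm (pp p C n)) ->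
  Nm (tt p A B C n) <= Kt p A B d * Nm (Cdiv C (Cmul A B)) ^ n.
Proof.
  intros Hp Hd H. unfold tt, Kt.
  assert (Hdp : 0 < dp p) by apply exp_pos.
  assert (H1 := pp_p_lower p n Hp). assert (H2 := H n).
  assert (N1 : pp p (RtoC p) n <> Cx0). { intro E; rewrite E, Nm_0 in H1; lra. }
  assert (N2 : pp p C n <> Cx0). { intro E; rewrite E, Nm_0 in H2; lra. }
  rewrite Nm_mul, Nm_div, !Nm_mul, Nm_Cpow.
  2: { intro E. apply (f_equal Nm) in E. rewrite Nm_mul, Nm_0 in E. apply Rmult_integral in E.
       destruct E as [E|E]; [apply N1|apply N2]; apply Nm_eq0; auto. }
  apply Rmult_le_compat_r. apply pow_le, Nm_ge0.
  unfold Rdiv. apply Rmult_le_compat. apply Rmult_le_pos; apply Nm_ge0.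
  apply Rlt_le, Rinv_0_lt_compat. apply Rmult_lt_0_compat; apply Nm_pos; auto.
  apply Rmult_le_compat; try apply Nm_ge0; apply pp_upper; auto.
  apply Rinv_le_contravar. apply Rmult_lt_0_compat; auto.
  apply Rmult_le_compat; lra.
Qed.

Definition FF (p : R) (A B C : Cx) : Cx := Clim (fun M => Csum M (tt p A B C)).

Lemma FF_cv p A B C : 0 < p < 1 -> good p C -> Nm (Cdiv C (Cmul A B)) < 1 ->
  Ccv (fun M => Csum M (tt p A B C)) (FF p A B C).
Proof.
  intros Hp G Hz. destruct (pp_lower_unif p C Hp G) as [d [Hd H]].
  destruct (Csum_series_cv (tt p A B C) (Kt p A B d) (Nm (Cdiv C (Cmul A B)))) as [l Hl].
  split; auto; apply Nm_ge0. intro; apply tt_bound; auto.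
  unfold FF. rewrite (Clim_eq _ l Hl). auto.
Qed.

Lemma tt_to0 p A B C : 0 < p < 1 -> good p C -> Nm (Cdiv C (Cmul A B)) < 1 ->
  Ccv (tt p A B C) Cx0.
Proof.
  intros Hp G Hz. destruct (pp_lower_unif p C Hp G) as [d [Hd H]].
  apply (Ccv_squeeze _ _ (fun n => Kt p A B d * Nm (Cdiv C (Cmul A B)) ^ n)).
  intro n. replace (Csub (tt p A B C n) Cx0) with (tt p A B C n) by field. apply tt_bound; auto.
  replace (Finite 0) with (Finite (Kt p A B d * 0)) by (f_equal; ring).
  apply is_lim_seq_mult'. apply is_lim_seq_const. apply is_lim_seq_geom. rewrite Rabs_pos_eq; auto. apply Nm_ge0.
Qed.

Lemma pow_to0 p : 0 < p < 1 -> Ccv (fun M => RtoC (p ^ M)) Cx0.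
Proof.
  intro Hp. apply Ccv_iff; simpl; split. apply is_lim_seq_geom. rewrite Rabs_pos_eq; lra.
  apply is_lim_seq_const.
Qed.

Lemma FF_contig p A B C : 0 < p < 1 -> A <> Cx0 -> B <> Cx0 -> good p C -> Nm (Cdiv C (Cmul A B)) < 1 ->
  Cmul (Cmul (Csub Cx1 C) (Csub Cx1 (Cdiv C (Cmul A B)))) (FF p A B C) =
  Cmul (Cmul (Csub Cx1 (Cdiv C A)) (Csub Cx1 (Cdiv C B))) (FF p A B (Cmul C (RtoC p))).
Proof.
  intros Hp HA HB G Hz.
  assert (Hz' : Nm (Cdiv (Cmul C (RtoC p)) (Cmul A B)) < 1).
  { replace (Cdiv (Cmul C (RtoC p)) (Cmul A B)) with (Cmul (Cdiv C (Cmul A B)) (RtoC p)) by (field; auto).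
    rewrite Nm_mul, Nm_RtoC, Rabs_pos_eq by lra. generalize (Nm_ge0 (Cdiv C (Cmul A B))). nra. }
  assert (G' : good p (Cmul C (RtoC p))). { assert (X := good_shift p C 1 G). rewrite pow_1 in X. exact X. }
  assert (L1 := Ccv_sub _ _ _ _ (Ccv_mul _ _ _ _ (Ccv_const (Cmul (Csub Cx1 C) (Csub Cx1 (Cdiv C (Cmul A B))))) (FF_cv p A B C Hp G Hz))
     (Ccv_mul _ _ _ _ (Ccv_const (Cmul (Csub Cx1 (Cdiv C A)) (Csub Cx1 (Cdiv C B)))) (FF_cv p A B _ Hp G' Hz'))).
  assert (L2 := Ccv_opp _ _ (Ccv_mul _ _ _ _ (Ccv_mul _ _ _ _ (Ccv_const (Csub Cx1 C)) (Ccv_sub _ _ _ _ (Ccv_const Cx1) (pow_to0 p Hp))) (tt_to0 p A B C Hp G Hz))).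
  assert (E := Ccv_unique _ _ _ L1 (Ccv_ext _ _ _ (fun M => eq_sym (partial_contig p A B C M Hp HA HB G)) L2)).
  match goal with |- ?X = ?Y => replace X with (Cadd (Csub X Y) Y) by (field; auto) end.
  rewrite E. field; auto.
Qed.
Lemma z_shift A B C x : Cdiv (Cmul C x) (Cmul A B) = Cmul (Cdiv C (Cmul A B)) x.
Proof. unfold Cdiv. ring. Qed.

Lemma FF_step p A B C : 0 < p < 1 -> A <> Cx0 -> B <> Cx0 -> good p C ->
  Csub Cx1 (Cdiv C (Cmul A B)) <> Cx0 -> Nm (Cdiv C (Cmul A B)) < 1 ->
  FF p A B C = Cmul (Cdiv (Cmul (Csub Cx1 (Cdiv C A)) (Csub Cx1 (Cdiv C B)))
                          (Cmul (Csub Cx1 C) (Csub Cx1 (Cdiv C (Cmul A B)))))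
                    (FF p A B (Cmul C (RtoC p))).
Proof.
  intros Hp HA HB G H1 Hz. assert (E := FF_contig p A B C Hp HA HB G Hz).
  assert (H0 := good_1 p C G).
  assert (HX : Cmul (Csub Cx1 C) (Csub Cx1 (Cdiv C (Cmul A B))) <> Cx0).
  { intro Q. apply (f_equal Nm) in Q. rewrite Nm_mul, Nm_0 in Q. apply Rmult_integral in Q.
    destruct Q as [Q|Q]; apply Nm_eq0 in Q; auto. }
  revert E HX.
  generalize (Cmul (Csub Cx1 C) (Csub Cx1 (Cdiv C (Cmul A B)))) as X.
  generalize (Cmul (Csub Cx1 (Cdiv C A)) (Csub Cx1 (Cdiv C B))) as Y.
  intros Y X E HX.
  transitivity (Cdiv (Cmul X (FF p A B C)) X).
  - field; auto.
  - rewrite E. field; auto.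
Qed.

Lemma nz_helper A B C x : A <> Cx0 -> B <> Cx0 -> Csub Cx1 (Cmul (Cdiv C (Cmul A B)) x) <> Cx0 ->
  Csub (Cmul A B) (Cmul C x) <> Cx0.
Proof.
  intros HA HB H E. apply H.
  replace (Csub Cx1 (Cmul (Cdiv C (Cmul A B)) x)) with (Cdiv (Csub (Cmul A B) (Cmul C x)) (Cmul A B)) by (field; auto).
  rewrite E. field; auto.
Qed.

Lemma FF_iter p A B C m : 0 < p < 1 -> A <> Cx0 -> B <> Cx0 -> good p C ->
  good p (Cdiv C (Cmul A B)) -> Nm (Cdiv C (Cmul A B)) < 1 ->
  FF p A B C = Cmul (Cdiv (Cmul (pp p (Cdiv C A) m) (pp p (Cdiv C B) m))
                          (Cmul (pp p C m) (pp p (Cdiv C (Cmul A B)) m)))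
                    (FF p A B (Cmul C (RtoC (p ^ m)))).
Proof.
  intros Hp HA HB G Gz Hz. induction m as [|m IH].
  - unfold pp. cbn [Cprod pow]. rewrite RtoC_1.
    replace (Cmul C Cx1) with C by field. field.
    intro E; apply (f_equal Re) in E; simpl in E; lra.
  - rewrite IH.
    assert (Gm : good p (Cmul C (RtoC (p ^ m)))) by (apply good_shift; auto).
    assert (Hzm : Nm (Cdiv (Cmul C (RtoC (p ^ m))) (Cmul A B)) < 1).
    { rewrite z_shift, Nm_mul, Nm_RtoC, Rabs_pos_eq by (apply pow_le; lra).
      assert (p ^ m <= 1) by (apply pow_le_one; lra). assert (0 <= p ^ m) by (apply pow_le; lra).
      generalize (Nm_ge0 (Cdiv C (Cmul A B))). nra. }
    assert (Nz : Csub Cx1 (Cdiv (Cmul C (RtoC (p ^ m))) (Cmul A B)) <> Cx0).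
    { rewrite z_shift. apply good_k; auto. }
    rewrite (FF_step p A B _ Hp HA HB Gm Nz Hzm).
    replace (Cmul (Cmul C (RtoC (p ^ m))) (RtoC p)) with (Cmul C (RtoC (p ^ S m))).
    2: { simpl. rewrite RtoC_mul. field. }
    rewrite !pp_S.
    assert (N1 := pp_neq0 p C m G). assert (N2 := pp_neq0 p _ m Gz).
    assert (N3 := good_k p C m G). assert (N4 := good_k p _ m Gz).
    rewrite z_shift in Nz |- *.
    field. repeat split; auto. apply nz_helper; auto.
Qed.
Definition d1 (p : R) : R := exp (- ((1/2) / ((1 - 1/2) * (1 - p)))).

Lemma FF_near1 p A B C : 0 < p < 1 -> good p C -> Nm C <= 1/2 -> Nm (Cdiv C (Cmul A B)) < 1 ->
  Nm (Csub (FF p A B C) Cx1) <= Kt p A B (d1 p) * Nm (Cdiv C (Cmul A B)) / (1 - Nm (Cdiv C (Cmul A B))).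
Proof.
  intros Hp G HC Hz. set (g := Nm (Cdiv C (Cmul A B))) in *.
  assert (Hg : 0 <= g) by apply Nm_ge0.
  assert (Hd : forall n, d1 p <= Nm (pp p C n)).
  { intro n. eapply Rle_trans. 2: apply (pp_lower p C n (1/2)); auto; lra.
    apply exp_mono_le. apply Ropp_le_contravar. unfold Rdiv. apply Rmult_le_compat_r; auto.
    apply Rlt_le, Rinv_0_lt_compat. apply Rmult_lt_0_compat; lra. }
  assert (Hd0 : 0 < d1 p) by apply exp_pos.
  assert (HK : 0 <= Kt p A B (d1 p)).
  { unfold Kt. apply Rmult_le_pos. apply Rmult_le_pos; apply Rlt_le, exp_pos.
    apply Rlt_le, Rinv_0_lt_compat. apply Rmult_lt_0_compat; auto. apply exp_pos. }
  apply (Ccv_bound _ _ _ _ 1 (FF_cv p A B C Hp G Hz)).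
  intros M HM. destruct M as [|M]. lia.
  rewrite Csum_shift, tt_0.
  replace (Csub (Cadd Cx1 (Csum M (fun n => tt p A B C (S n)))) Cx1) with (Csum M (fun n => tt p A B C (S n))) by field.
  eapply Rle_trans. apply (Nm_Csum M _ (fun n => (Kt p A B (d1 p) * g) * g ^ n)).
  { intro n. eapply Rle_trans. apply (tt_bound p A B C (d1 p) (S n) Hp Hd0 Hd). fold g. simpl. lra. }
  apply Rsum_geom_le. apply Rmult_le_pos; auto. lra.
Qed.

Lemma FF_to1 p A B C : 0 < p < 1 -> A <> Cx0 -> B <> Cx0 -> good p C -> Nm (Cdiv C (Cmul A B)) < 1 ->
  Ccv (fun m => FF p A B (Cmul C (RtoC (p ^ m)))) Cx1.
Proof.
  intros Hp HA HB G Hz.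
  destruct (small_pow p (Nm C) (1/2) Hp) as [m0 Hm0]. lra.
  apply (Ccv_incr _ _ m0).
  set (g := Nm (Cdiv C (Cmul A B))) in *.
  apply (Ccv_squeeze _ _ (fun m => Kt p A B (d1 p) * (g * p ^ (m + m0)) / (1 - g))).
  - intro m.
    assert (Hx : Nm (Cdiv (Cmul C (RtoC (p ^ (m + m0)))) (Cmul A B)) = g * p ^ (m + m0)).
    { rewrite z_shift, Nm_mul, Nm_RtoC, Rabs_pos_eq by (apply pow_le; lra). reflexivity. }
    assert (Hpm : 0 <= p ^ (m + m0) <= 1). { split. apply pow_le; lra. apply pow_le_one; lra. }
    assert (Hg : 0 <= g) by apply Nm_ge0.
    assert (Hgm : g * p ^ (m + m0) < 1) by nra.
    eapply Rle_trans. apply FF_near1; auto.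
    + apply good_shift; auto.
    + rewrite Nm_mul, Nm_RtoC, Rabs_pos_eq by lra. left. apply Hm0. lia.
    + rewrite Hx. auto.
    + rewrite Hx. unfold Rdiv. apply Rmult_le_compat_l.
      apply Rmult_le_pos. unfold Kt. apply Rmult_le_pos. apply Rmult_le_pos; apply Rlt_le, exp_pos.
      apply Rlt_le, Rinv_0_lt_compat. apply Rmult_lt_0_compat; apply exp_pos. nra.
      apply Rinv_le_contravar. lra. nra.
  - replace (Finite 0) with (Finite (Kt p A B (d1 p) * (g * 0) / (1 - g))) by (f_equal; field; lra).
    apply is_lim_seq_div'. apply is_lim_seq_mult'. apply is_lim_seq_const. apply is_lim_seq_mult'. apply is_lim_seq_const.
    apply (is_lim_seq_incr_n (fun n => p ^ n) m0). apply is_lim_seq_geom. rewrite Rabs_pos_eq; lra.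
    apply is_lim_seq_const. lra.
Qed.

Theorem qgauss p A B C : 0 < p < 1 -> A <> Cx0 -> B <> Cx0 -> good p C ->
  good p (Cdiv C (Cmul A B)) -> Nm (Cdiv C (Cmul A B)) < 1 ->
  Ccv (fun M => Csum M (tt p A B C))
      (Cdiv (Cmul (PP p (Cdiv C A)) (PP p (Cdiv C B))) (Cmul (PP p C) (PP p (Cdiv C (Cmul A B))))).
Proof.
  intros Hp HA HB G Gz Hz.
  replace (Cdiv (Cmul (PP p (Cdiv C A)) (PP p (Cdiv C B))) (Cmul (PP p C) (PP p (Cdiv C (Cmul A B)))))
    with (FF p A B C). apply FF_cv; auto.
  assert (N1 := PP_neq0 p C Hp G). assert (N2 := PP_neq0 p _ Hp Gz).
  assert (N12 : Cmul (PP p C) (PP p (Cdiv C (Cmul A B))) <> Cx0).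
  { intro E; apply (f_equal Nm) in E; rewrite Nm_mul, Nm_0 in E; apply Rmult_integral in E;
    destruct E as [E|E]; apply Nm_eq0 in E; auto. }
  assert (L := Ccv_mul _ _ _ _ (Ccv_div _ _ _ _ (Ccv_mul _ _ _ _ (PP_cv p (Cdiv C A) Hp) (PP_cv p (Cdiv C B) Hp))
                   (Ccv_mul _ _ _ _ (PP_cv p C Hp) (PP_cv p _ Hp)) N12)
               (FF_to1 p A B C Hp HA HB G Hz)).
  assert (L' : Ccv (fun m => Cmul (Cdiv (Cmul (pp p (Cdiv C A) m) (pp p (Cdiv C B) m))
                          (Cmul (pp p C m) (pp p (Cdiv C (Cmul A B)) m)))
                    (FF p A B (Cmul C (RtoC (p ^ m))))) (FF p A B C)).
  { apply (Ccv_ext (fun _ => FF p A B C)). intro m. apply FF_iter; auto. apply Ccv_const. }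
  rewrite (Ccv_unique _ _ _ L' L). field. auto.
Qed.
Definition EE (q : R) (x : Cx) : Cx := qpow q (Cmul (RtoC 2) x).
Definition QQ (q : R) (s : Cx) : Cx := qpow (1 - q ^ 2) s.

Lemma EE_add q x y : EE q (Cadd x y) = Cmul (EE q x) (EE q y).
Proof. unfold EE. rewrite <- qpow_add. f_equal. ring. Qed.

Lemma EE_sub q x y : EE q (Csub x y) = Cdiv (EE q x) (EE q y).
Proof. unfold EE. rewrite <- qpow_sub. f_equal. ring. Qed.

Lemma EE_nat q n : 0 < q -> EE q (RtoC (INR n)) = RtoC ((q ^ 2) ^ n).
Proof.
  intro Hq. unfold EE. replace (Cmul (RtoC 2) (RtoC (INR n))) with (Cmul (RtoC (INR n)) (RtoC 2)) by ring.
  rewrite qpow_nat, qpow_RtoC by auto. replace 2 with (INR 2) by (simpl; ring).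
  rewrite Rpower_nat by auto. apply Cpow_RtoC.
Qed.

Lemma EE_neq0 q x : EE q x <> Cx0. Proof. apply qpow_neq0. Qed.

Lemma ok_good q x : 0 < q -> qGamma2_ok q x -> good (q ^ 2) (EE q x).
Proof.
  intros Hq H k E. apply (H k). fold (EE q (Cadd x (RtoC (INR k)))). rewrite EE_add, EE_nat by auto. exact E.
Qed.

Lemma QQ_add q x y : QQ q (Cadd x y) = Cmul (QQ q x) (QQ q y).
Proof. apply qpow_add. Qed.

Lemma QQ_neq0 q x : QQ q x <> Cx0. Proof. apply qpow_neq0. Qed.

Lemma QQ_nat q n : 0 < q < 1 -> QQ q (RtoC (INR n)) = Cpow (RtoC (1 - q ^ 2)) n.
Proof.
  intro Hq. unfold QQ. replace (RtoC (INR n)) with (Cmul (RtoC (INR n)) (RtoC 1)) by (rewrite RtoC_1; ring).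
  rewrite qpow_nat, qpow_RtoC. rewrite Rpower_1. auto.
  all: assert (q ^ 2 < 1) by (simpl; nra); lra.
Qed.

Lemma Gamma_form q x : qGamma2 q x =
  Cmul (Cdiv (PP (q ^ 2) (RtoC (q ^ 2))) (PP (q ^ 2) (EE q x))) (QQ q (Csub Cx1 x)).
Proof. reflexivity. Qed.

Lemma pq_range q : 0 < q < 1 -> 0 < q ^ 2 < 1.
Proof. intro. simpl. split; nra. Qed.

Lemma Gamma_neq0 q x : 0 < q < 1 -> good (q ^ 2) (EE q x) -> qGamma2 q x <> Cx0.
Proof.
  intros Hq G. assert (Hp := pq_range q Hq). rewrite Gamma_form.
  assert (N1 := PP_neq0 _ _ Hp (good_p _ Hp)). assert (N2 := PP_neq0 _ _ Hp G). assert (N3 := QQ_neq0 q (Csub Cx1 x)).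
  intro E. apply (f_equal Nm) in E. rewrite Nm_mul, Nm_div, Nm_0 in E by auto.
  apply Rmult_integral in E. destruct E as [E|E].
  - unfold Rdiv in E. apply Rmult_integral in E. destruct E as [E|E]. apply N1, Nm_eq0; auto.
    assert (0 < / Nm (PP (q ^ 2) (EE q x))) by (apply Rinv_0_lt_compat, Nm_pos; auto). lra.
  - apply N3, Nm_eq0; auto.
Qed.

Lemma Gamma_shift q x n : 0 < q < 1 -> good (q ^ 2) (EE q x) ->
  qGamma2 q (Cadd x (RtoC (INR n))) =
  Cdiv (Cmul (qGamma2 q x) (pp (q ^ 2) (EE q x) n)) (Cpow (RtoC (1 - q ^ 2)) n).
Proof.
  intros Hq G. assert (Hp := pq_range q Hq). rewrite !Gamma_form.
  rewrite EE_add, EE_nat by lra.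
  assert (S := PP_split _ (EE q x) n Hp).
  assert (N1 := PP_neq0 _ _ Hp G). assert (N2 := pp_neq0 _ _ n G).
  assert (N3 : PP (q ^ 2) (Cmul (EE q x) (RtoC ((q ^ 2) ^ n))) <> Cx0).
  { apply PP_neq0; auto. apply good_shift; auto. }
  replace (Csub Cx1 (Cadd x (RtoC (INR n)))) with (Csub (Csub Cx1 x) (RtoC (INR n))) by ring.
  unfold QQ. rewrite qpow_sub. fold (QQ q (Csub Cx1 x)). fold (QQ q (RtoC (INR n))). rewrite QQ_nat by auto.
  assert (N4 : Cpow (RtoC (1 - q ^ 2)) n <> Cx0). { apply Cpow_neq0, RtoC_neq0. simpl in *. nra. }
  rewrite S. field. repeat split; auto.
Qed.

Lemma qfact2_pp q n : 0 < q < 1 ->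
  RtoC (qfact2 q n) = Cdiv (pp (q ^ 2) (RtoC (q ^ 2)) n) (Cpow (RtoC (1 - q ^ 2)) n).
Proof.
  intro Hq. assert (Hp := pq_range q Hq). assert (H1 : 1 - q ^ 2 <> 0) by lra.
  induction n.
  - cbn [qfact2]. unfold pp, Cpow. cbn [Cprod]. rewrite RtoC_1. field. intro E; apply (f_equal Re) in E; simpl in E; lra.
  - cbn [qfact2]. rewrite RtoC_mul, IHn, pp_S, Cpow_S.
    replace (q ^ (2 * S n)) with (q ^ 2 * (q ^ 2) ^ n) by (rewrite pow_mult; simpl; ring).
    rewrite RtoC_div by auto. rewrite !RtoC_sub, !RtoC_mul, !RtoC_1.
    assert (N4 : Cpow (RtoC (1 - q ^ 2)) n <> Cx0) by (apply Cpow_neq0, RtoC_neq0; auto).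
    rewrite RtoC_sub, RtoC_1 in N4. assert (N5 : Csub Cx1 (RtoC (q ^ 2)) <> Cx0).
    { rewrite <- RtoC_1, <- RtoC_sub. apply RtoC_neq0; auto. }
    field. auto.
Qed.
Lemma refl_formula q al : 0 < q < 1 -> good (q ^ 2) (EE q al) -> good (q ^ 2) (EE q (Csub Cx1 al)) ->
  Cmul (qpow q (Copp (Cmul al (Csub al Cx1)))) (Cdiv (sin_q q al) (pi_q q)) =
  Cinv (Cmul (qGamma2 q al) (qGamma2 q (Csub Cx1 al))).
Proof.
  intros Hq G1 G2. assert (Hp := pq_range q Hq).
  unfold sin_q, pi_q. rewrite !Gamma_form.
  change (qpoch_inf ?w (q ^ 2)) with (PP (q ^ 2) w).
  fold (EE q al).
  replace (qpow q (Csub (RtoC 2) (Cmul (RtoC 2) al))) with (EE q (Csub Cx1 al)) by (unfold EE; f_equal; ring).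
  assert (E1 : Cmul (qpow q (Copp (Cmul al (Csub al Cx1)))) (qpow q (Cmul (Csub al (RtoC (1 / 2))) (Csub al (RtoC (1 / 2)))))
            = RtoC (Rpower q (1/4))).
  { rewrite <- qpow_add, <- qpow_RtoC by lra. f_equal. apply Cx_ext; simpl; field. }
  assert (E2 : Cmul (QQ q (Csub Cx1 al)) (QQ q (Csub Cx1 (Csub Cx1 al))) = RtoC (1 - q ^ 2)).
  { rewrite <- QQ_add. replace (Cadd (Csub Cx1 al) (Csub Cx1 (Csub Cx1 al))) with (RtoC (INR 1)) by (simpl; rewrite RtoC_1; ring).
    rewrite QQ_nat by auto. unfold Cpow; simpl. rewrite <- RtoC_1, <- RtoC_mul. f_equal; ring. }
  assert (N1 := PP_neq0 _ _ Hp (good_p _ Hp)). assert (N2 := PP_neq0 _ _ Hp G1). assert (N3 := PP_neq0 _ _ Hp G2).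
  assert (Gq : good (q ^ 2) (RtoC q)).
  { intros k E. apply (f_equal Re) in E.
    assert ((q ^ 2) ^ k <= 1) by (apply pow_le_one; lra). assert (0 <= (q ^ 2) ^ k) by (apply pow_le; lra).
    revert E H H0. generalize ((q ^ 2) ^ k). intros X E H H0. simpl in E. nra. }
  assert (N4 := PP_neq0 _ _ Hp Gq).
  assert (N5 : RtoC (Rpower q (1/4)) <> Cx0) by (apply RtoC_neq0; apply Rgt_not_eq; unfold Rpower; apply exp_pos).
  assert (N6 : RtoC (1 - q ^ 2) <> Cx0) by (apply RtoC_neq0; lra).
  assert (N7 := QQ_neq0 q (Csub Cx1 al)). assert (N8 := QQ_neq0 q (Csub Cx1 (Csub Cx1 al))).
  rewrite RtoC_mul.
  revert E1 E2.
  generalize (qpow q (Copp (Cmul al (Csub al Cx1)))) (qpow q (Cmul (Csub al (RtoC (1 / 2))) (Csub al (RtoC (1 / 2))))).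
  intros X Y E1 E2.
  replace X with (Cdiv (RtoC (Rpower q (1 / 4))) Y).
  2: { rewrite <- E1. field. intro Z. rewrite Z in E1. apply N5. rewrite <- E1. ring. }
  replace (QQ q (Csub Cx1 (Csub Cx1 al))) with (Cdiv (RtoC (1 - q ^ 2)) (QQ q (Csub Cx1 al))) by (rewrite <- E2; field; auto).
  assert (NY : Y <> Cx0). { intro Z. rewrite Z in E1. apply N5. rewrite <- E1. ring. }
  field. repeat split; auto.
Qed.
Lemma Csum_scal N K f : Csum N (fun n => Cmul K (f n)) = Cmul K (Csum N f).
Proof. induction N; cbn [Csum]. field. rewrite IHN. field. Qed.

Lemma Nm_EE_lt1 q w : 0 < q < 1 -> 0 < Re w -> Nm (EE q w) < 1.
Proof.
  intros Hq Hw. unfold EE. rewrite Nm_qpow by lra. simpl.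
  assert (ln q < 0) by (rewrite <- ln_1; apply ln_increasing; lra).
  rewrite <- exp_0. apply exp_increasing. nra.
Qed.

Lemma Cmul_assoc_l x y z : Cmul (Cmul x y) z = Cmul x (Cmul y z).
Proof. ring. Qed.

Theorem theorem1p1 (q : R) (alpha a b c : Cx) :
  0 < q -> q < 1 ->
  0 < Re (Csub (Csub c a) b) ->
  (forall n : nat, qGamma2_ok q (Cadd alpha (Cadd a (RtoC (INR n))))) ->
  (forall n : nat, qGamma2_ok q (Cadd (Csub Cx1 alpha) (Cadd b (RtoC (INR n))))) ->
  (forall n : nat, qGamma2_ok q (Cadd c (RtoC (INR n + 1)))) ->
  qGamma2_ok q alpha ->
  qGamma2_ok q (Csub Cx1 alpha) ->
  qGamma2_ok q (Csub (Csub c a) b) ->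
  qGamma2_ok q (Cadd (Csub Cx1 alpha) (Csub c a)) ->
  qGamma2_ok q (Cadd alpha (Csub c b)) ->
  Ccv (fun N => Csum N (fun n =>
         Cmul (Cdiv (Cmul (qshift2 q alpha (Cadd a (RtoC (INR n))))
                          (qshift2 q (Csub Cx1 alpha) (Cadd b (RtoC (INR n)))))
                    (Cmul (RtoC (qfact2 q n)) (qGamma2 q (Cadd c (RtoC (INR n + 1))))))
              (qpow q (Cmul (RtoC (2 * INR n)) (Csub (Csub c a) b)))))
      (Cmul (Cmul (Cdiv (Cmul (Cmul (qshift2 q alpha a) (qshift2 q (Csub Cx1 alpha) b))
                              (qGamma2 q (Csub (Csub c a) b)))
                        (Cmul (qshift2 q (Csub Cx1 alpha) (Csub c a)) (qshift2 q alpha (Csub c b))))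
                  (qpow q (Copp (Cmul alpha (Csub alpha Cx1)))))
            (Cdiv (sin_q q alpha) (pi_q q))).
Proof.
  intros Hq0 Hq1 Hre Ha Hb Hc Hal Hal' Hcab Hca Hcb.
  assert (Hq : 0 < q < 1) by lra. assert (Hp := pq_range q Hq).
  assert (E0 : RtoC (INR 0) = Cx0) by reflexivity.
  assert (GA : good (q ^ 2) (EE q (Cadd alpha a))).
  { apply ok_good; auto. specialize (Ha 0%nat). rewrite E0 in Ha. replace (Cadd alpha a) with (Cadd alpha (Cadd a Cx0)) by ring. auto. }
  assert (GB : good (q ^ 2) (EE q (Cadd (Csub Cx1 alpha) b))).
  { apply ok_good; auto. specialize (Hb 0%nat). rewrite E0 in Hb. replace (Cadd (Csub Cx1 alpha) b) with (Cadd (Csub Cx1 alpha) (Cadd b Cx0)) by ring. auto. }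
  assert (EC : forall n, Cadd c (RtoC (INR n + 1)) = Cadd (Cadd c Cx1) (RtoC (INR n))).
  { intro n. rewrite RtoC_add, RtoC_1. ring. }
  assert (GC : good (q ^ 2) (EE q (Cadd c Cx1))).
  { apply ok_good; auto. specialize (Hc 0%nat). rewrite EC, E0 in Hc. replace (Cadd c Cx1) with (Cadd (Cadd c Cx1) Cx0) by ring. auto. }
  assert (Gz := ok_good q _ Hq0 Hcab). assert (Gal := ok_good q _ Hq0 Hal). assert (Gal' := ok_good q _ Hq0 Hal').
  assert (Gca := ok_good q _ Hq0 Hca). assert (Gcb := ok_good q _ Hq0 Hcb).
  set (A := EE q (Cadd alpha a)) in *. set (B := EE q (Cadd (Csub Cx1 alpha) b)) in *. set (C := EE q (Cadd c Cx1)) in *.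
  assert (HA : A <> Cx0) by apply EE_neq0. assert (HB : B <> Cx0) by apply EE_neq0.
  assert (Ez : EE q (Csub (Csub c a) b) = Cdiv C (Cmul A B)).
  { assert (EQ : C = Cmul A (Cmul B (EE q (Csub (Csub c a) b)))).
    { unfold C, A, B. rewrite <- !EE_add. f_equal. ring. }
    rewrite EQ. field; auto. }
  assert (ECA : EE q (Cadd (Csub Cx1 alpha) (Csub c a)) = Cdiv C A).
  { assert (EQ : C = Cmul A (EE q (Cadd (Csub Cx1 alpha) (Csub c a)))).
    { unfold C, A. rewrite <- !EE_add. f_equal. ring. }
    rewrite EQ. field; auto. }
  assert (ECB : EE q (Cadd alpha (Csub c b)) = Cdiv C B).
  { assert (EQ : C = Cmul B (EE q (Cadd alpha (Csub c b)))).
    { unfold C, B. rewrite <- !EE_add. f_equal. ring. }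
    rewrite EQ. field; auto. }
  rewrite Ez in Gz. rewrite ECA in Gca. rewrite ECB in Gcb.
  assert (Hz : Nm (Cdiv C (Cmul A B)) < 1) by (rewrite <- Ez; apply Nm_EE_lt1; auto).
  assert (NGal := Gamma_neq0 q _ Hq Gal). assert (NGal' := Gamma_neq0 q _ Hq Gal').
  assert (NGC := Gamma_neq0 q _ Hq GC).
  set (K0 := Cdiv (Cmul (qGamma2 q (Cadd alpha a)) (qGamma2 q (Cadd (Csub Cx1 alpha) b)))
                  (Cmul (Cmul (qGamma2 q alpha) (qGamma2 q (Csub Cx1 alpha))) (qGamma2 q (Cadd c Cx1)))).
  assert (Hterm : forall n,
    Cmul (Cdiv (Cmul (qshift2 q alpha (Cadd a (RtoC (INR n))))
                          (qshift2 q (Csub Cx1 alpha) (Cadd b (RtoC (INR n)))))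
                    (Cmul (RtoC (qfact2 q n)) (qGamma2 q (Cadd c (RtoC (INR n + 1))))))
              (qpow q (Cmul (RtoC (2 * INR n)) (Csub (Csub c a) b)))
    = Cmul K0 (tt (q ^ 2) A B C n)).
  { intro n. unfold qshift2.
    replace (Cadd alpha (Cadd a (RtoC (INR n)))) with (Cadd (Cadd alpha a) (RtoC (INR n))) by ring.
    replace (Cadd (Csub Cx1 alpha) (Cadd b (RtoC (INR n)))) with (Cadd (Cadd (Csub Cx1 alpha) b) (RtoC (INR n))) by ring.
    rewrite EC, !Gamma_shift, qfact2_pp by auto.
    replace (Cmul (RtoC (2 * INR n)) (Csub (Csub c a) b)) with (Cmul (RtoC (INR n)) (Cmul (RtoC 2) (Csub (Csub c a) b)))
      by (rewrite RtoC_mul; ring).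
    rewrite qpow_nat. fold (EE q (Csub (Csub c a) b)). rewrite Ez. fold A B C.
    unfold tt, K0.
    assert (N1 := pp_neq0 _ _ n (good_p _ Hp)). assert (N2 := pp_neq0 _ _ n GC).
    assert (N3 : Cpow (RtoC (1 - q ^ 2)) n <> Cx0) by (apply Cpow_neq0, RtoC_neq0; lra).
    field. repeat split; auto. }
  set (T := Cdiv (Cmul (PP (q ^ 2) (Cdiv C A)) (PP (q ^ 2) (Cdiv C B))) (Cmul (PP (q ^ 2) C) (PP (q ^ 2) (Cdiv C (Cmul A B))))).
  assert (L : Ccv (fun N => Csum N (fun n => Cmul K0 (tt (q ^ 2) A B C n))) (Cmul K0 T)).
  { apply (Ccv_ext (fun N => Cmul K0 (Csum N (tt (q ^ 2) A B C)))).
    intro N. symmetry. apply Csum_scal.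
    apply Ccv_mul. apply Ccv_const. apply qgauss; auto. }
  eapply Ccv_ext. intro N. symmetry. apply Csum_ext. intro n. apply Hterm.
  replace (Cmul (Cmul (Cdiv (Cmul (Cmul (qshift2 q alpha a) (qshift2 q (Csub Cx1 alpha) b))
                              (qGamma2 q (Csub (Csub c a) b)))
                        (Cmul (qshift2 q (Csub Cx1 alpha) (Csub c a)) (qshift2 q alpha (Csub c b))))
                  (qpow q (Copp (Cmul alpha (Csub alpha Cx1)))))
            (Cdiv (sin_q q alpha) (pi_q q))) with (Cmul K0 T). exact L.
  rewrite (Cmul_assoc_l (Cdiv _ _) (qpow _ _)).
  rewrite refl_formula by auto. unfold qshift2, K0, T.
  rewrite (Gamma_form q (Csub (Csub c a) b)), (Gamma_form q (Cadd (Csub Cx1 alpha) (Csub c a))),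
          (Gamma_form q (Cadd alpha (Csub c b))), (Gamma_form q (Cadd c Cx1)).
  fold C. rewrite Ez, ECA, ECB.
  assert (EQ : QQ q (Csub Cx1 (Csub (Csub c a) b)) =
     Cdiv (Cmul (QQ q (Csub Cx1 (Cadd (Csub Cx1 alpha) (Csub c a)))) (QQ q (Csub Cx1 (Cadd alpha (Csub c b)))))
          (QQ q (Csub Cx1 (Cadd c Cx1)))).
  { assert (NQ := QQ_neq0 q (Csub Cx1 (Cadd c Cx1))).
    transitivity (Cdiv (QQ q (Cadd (Csub Cx1 (Csub (Csub c a) b)) (Csub Cx1 (Cadd c Cx1)))) (QQ q (Csub Cx1 (Cadd c Cx1)))).
    rewrite QQ_add; field; auto.
    rewrite <- QQ_add. f_equal. f_equal. ring. }
  rewrite EQ.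
  assert (N1 := PP_neq0 _ _ Hp (good_p _ Hp)). assert (N2 := PP_neq0 _ _ Hp GC).
  assert (N3 := PP_neq0 _ _ Hp Gz). assert (N4 := PP_neq0 _ _ Hp Gca). assert (N5 := PP_neq0 _ _ Hp Gcb).
  assert (N6 := QQ_neq0 q (Csub Cx1 (Cadd c Cx1))). assert (N7 := QQ_neq0 q (Csub Cx1 (Cadd (Csub Cx1 alpha) (Csub c a)))).
  assert (N8 := QQ_neq0 q (Csub Cx1 (Cadd alpha (Csub c b)))).
  field. repeat split; auto.
Qed.
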